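(* Let $p=p(n)\in[0,1]$ and let $j=j(n)$, $k=k(n)$ be positive integer-valued functions of $n$. If $$\binom{n}{j}\binom{n}{k}\,p^{jk}\to 0\quad(n\to\infty),$$ then almost always $\|\mathcal{N}[G(n,p)]\|$ strong deformation retracts onto a subspace that is the geometric realization of a simplicial complex of dimension at most $j+k-3$.
   Context: For a graph $G$, the neighborhood complex $\mathcal{N}[G]$ is the simplicial complex on vertex set $V(G)$ whose faces are all subsets of $V(G)$ having a common neighbor. $\|\Delta\|$ denotes the geometric realization of a simplicial complex $\Delta$. $G(n,p)$ is the Erdős–Rényi random graph on vertex set $[n]$ with each possible edge present independently with probability $p$. A property holds almost always (a.a.) if its probability tends to $1$ as $n\to\infty$. *)

(* Defs.v *)
From HB Require Import structures.
From mathcomp Require Import all_boot all_order all_algebra.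
From mathcomp Require Import all_classical all_reals all_analysis.
Set Implicit Arguments. Unset Strict Implicit. Unset Printing Implicit Defensive.
Import Order.TTheory GRing.Theory Num.Theory.
Import numFieldNormedType.Exports.
Local Open Scope classical_set_scope.
Local Open Scope ring_scope.

Definition pairs (n : nat) : {set {set 'I_n}} := ([set e : {set 'I_n} | #|e| == 2%N])%SET.

Definition is_graph (n : nat) (E : {set {set 'I_n}}) : bool := E \subset pairs n.

Definition adj (n : nat) (E : {set {set 'I_n}}) (u v : 'I_n) : bool :=
  ([set u; v])%SET \in E.

Definition gnp_prob (R : realType) (n : nat) (p : R) (P : {set {set 'I_n}} -> Prop) : R :=
  \sum_(E : {set {set 'I_n}} | is_graph E && `[< P E >])
     p ^+ #|E| * (1 - p) ^+ (#|pairs n| - #|E|).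

Definition simplicial_complex (V : finType) (D : {set {set V}}) : Prop :=
  forall s t : {set V}, s \in D -> t \subset s -> t \in D.

(* dim D <= d, stated as: every face has at most d+1 vertices (dm1 = d+1). *)
Definition dim_le_succ (V : finType) (D : {set {set V}}) (dp1 : nat) : Prop :=
  forall s, s \in D -> (#|s| <= dp1)%N.

Definition nbhd_complex (n : nat) (E : {set {set 'I_n}}) : {set {set 'I_n}} :=
  ([set s : {set 'I_n} | [exists v, [forall u in s, adj E u v]]])%SET.

Definition realization (R : realType) (m : nat) (D : {set {set 'I_m}}) : set 'rV[R]_m :=
  [set x | (forall i, 0 <= x ord0 i) /\ \sum_i x ord0 i = 1 /\
           ([set i | x ord0 i != 0])%SET \in D].

Definition strong_def_retract (T : topologicalType) (R : realType) (X A : set T) : Prop :=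
  A `<=` X /\
  exists H : T * R -> T,
    {within X `*` `[0%R, 1%R]%classic, continuous H} /\
    (forall x t, X x -> `[0%R, 1%R]%classic t -> X (H (x, t))) /\
    (forall x, X x -> H (x, 0) = x) /\
    (forall x, X x -> A (H (x, 1))) /\
    (forall a t, A a -> `[0%R, 1%R]%classic t -> H (a, t) = a).

Definition homeomorphic (T U : topologicalType) (A : set T) (B : set U) : Prop :=
  exists (f : T -> U) (g : U -> T),
    {within A, continuous f} /\ {within B, continuous g} /\
    (forall x, A x -> B (f x)) /\ (forall y, B y -> A (g y)) /\
    (forall x, A x -> g (f x) = x) /\ (forall y, B y -> f (g y) = y).

(* ||N[G]|| strong deformation retracts onto a subspace which is (homeomorphic
   to) the geometric realization of a simplicial complex of dimension <= d,
   where dp1 = d + 1. *)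
Definition sdr_onto_complex_dim (R : realType) (n : nat) (E : {set {set 'I_n}})
    (dp1 : nat) : Prop :=
  exists A : set 'rV[R]_n,
    @strong_def_retract _ R (realization (R:=R) (nbhd_complex E)) A /\
    exists (m : nat) (D : {set {set 'I_m}}),
      simplicial_complex D /\ dim_le_succ D dp1 /\
      homeomorphic A (realization (R:=R) D).

(* Main.v *)
Require Import Defs.
From HB Require Import structures.
From mathcomp Require Import all_boot all_order all_algebra.
From mathcomp Require Import all_classical all_reals all_analysis.
From mathcomp Require Import zify.
Import Order.TTheory GRing.Theory Num.Theory.
Import numFieldNormedType.Exports.
Local Open Scope classical_set_scope.
Local Open Scope ring_scope.

Module TH2.
Set Implicit Arguments. Unset Strict Implicit. Unset Printing Implicit Defensive.
Local Close Scope classical_set_scope.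
Local Notation set0 := (@finset.set0 _).
Local Notation setUC := finset.setUC.
Local Notation subsetP := fintype.subsetP.
Local Notation in_set0 := finset.in_set0.
Local Notation setX := finset.setX.
Local Notation subset_trans := fintype.subset_trans.
Local Notation eqEsubset := finset.eqEsubset.
Local Notation in_setC := finset.in_setC.
Local Notation properEneq := finset.properEneq.
Local Notation setD1K := finset.setD1K.
Local Notation sub0set := finset.sub0set.
Local Notation subsetUr := finset.subsetUr.

Section Gap.
Variable R : realFieldType.
Variable n : nat.
Implicit Types (x : 'I_n -> R) (t : {set 'I_n}).

Definition mn x t : R := \big[Num.min/1]_(i in t) x i.
Definition mx x t : R := \big[Num.max/0]_(i in ~: t) x i.
Definition gap x t : R := if t == set0 then 0 else Num.max 0 (mn x t - mx x t).
Definition in01 x := forall i, 0 <= x i <= 1.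

Lemma mn_le x t i : i \in t -> mn x t <= x i.
Proof. by move=> it; apply: bigmin_le_cond. Qed.

Lemma mn_att x t : in01 x -> t != set0 -> exists2 i, i \in t & mn x t = x i.
Proof.
move=> h /set0Pn [j jt].
have [i ii e] := @eq_bigmin _ _ _ 1 j (fun i => i \in t) x jt
  (fun i _ => (andP (h i)).2).
by exists i => //; exact: e.
Qed.

Lemma mx_ge x t i : i \notin t -> x i <= mx x t.
Proof. by move=> it; apply: le_bigmax_cond; rewrite inE. Qed.

Lemma mx_ge0 x t : 0 <= mx x t.
Proof. exact: bigmax_ge_id. Qed.

Lemma mx_att x t : in01 x -> mx x t = 0 \/ exists2 i, i \notin t & mx x t = x i.
Proof.
move=> h; case: (boolP [exists i, i \notin t]) => [/existsP [j jt]|].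
  have jt' : j \in ~: t by rewrite inE.
  have [i ii e] := @eq_bigmax _ _ _ 0 j (fun i => i \in ~: t) x jt'
    (fun i _ => (andP (h i)).1).
  by right; exists i; [rewrite -in_setC | exact: e].
rewrite negb_exists => /forallP hn; left; apply: bigmax_eq_id => i.
by rewrite inE (negbTE (hn i)).
Qed.

Lemma gap_ge0 x t : 0 <= gap x t.
Proof. by rewrite /gap; case: ifP => // _; rewrite le_max lexx. Qed.

Lemma gap0 x : gap x set0 = 0.
Proof. by rewrite /gap eqxx. Qed.

Lemma gapE x t : t != set0 -> gap x t = Num.max 0 (mn x t - mx x t).
Proof. by rewrite /gap => /negbTE ->. Qed.

Lemma gap_pos x t : 0 < gap x t ->
  [/\ t != set0, forall i, i \in t -> 0 < x i &
      forall i j, i \in t -> j \notin t -> x j < x i].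
Proof.
rewrite /gap; case: eqP => [_|/eqP tn]; first by rewrite ltxx.
rewrite lt_max ltxx /= subr_gt0 => h.
split=> // [i it|i j it jt].
  exact: le_lt_trans (mx_ge0 _ _) (lt_le_trans h (mn_le _ it)).
exact: le_lt_trans (mx_ge _ jt) (lt_le_trans h (mn_le _ it)).
Qed.

Lemma gap_zero_of x t a : in01 x -> a \in t -> x a = 0 -> gap x t = 0.
Proof.
move=> h at0 xa; apply/eqP; rewrite eq_le gap_ge0 andbT.
rewrite leNgt; apply/negP => /gap_pos [_ /(_ a at0)]; by rewrite xa ltxx.
Qed.

Lemma gap_chain x s t : 0 < gap x s -> 0 < gap x t -> (s \subset t) || (t \subset s).
Proof.
move=> /gap_pos [_ _ hs] /gap_pos [_ _ ht].
case: (boolP (s \subset t)) => //= /subsetPn [u us ut].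
apply/subsetP => v vt; apply/negPn/negP => vs.
have := hs _ _ us vs; have := ht _ _ vt ut.
by move=> a b; have := lt_trans a b; rewrite ltxx.
Qed.

Lemma mn_shift x x' t m : in01 x -> in01 x' -> t != set0 ->
  (forall i, i \in t -> x i = x' i + m) -> mn x t = mn x' t + m.
Proof.
move=> h h' tn e; apply: le_anti; apply/andP; split.
  have [a at0 ->] := mn_att h' tn.
  by rewrite -e //; apply: mn_le.
have [b bt ->] := mn_att h tn; rewrite e // lerD2r; exact: mn_le.
Qed.

Lemma SL x x' s u m : in01 x -> in01 x' -> s != set0 ->
  (forall i, i \notin s -> x' i = 0) -> u \in s -> x' u = 0 -> 0 < m ->
  (forall i, x i = x' i + (i \in s)%:R * m) ->
  forall t, gap x t = gap x' t + (t == s)%:R * m.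
Proof.
move=> h h' sn x'o us x'u m0 ex t.
have xo : forall i, i \notin s -> x i = 0.
  by move=> i iS; rewrite ex x'o // (negbTE iS) mul0r addr0.
have xi : forall i, i \in s -> x i = x' i + m.
  by move=> i iS; rewrite ex iS mul1r.
case: (eqVneq t set0) => [->|tn].
  rewrite !gap0 add0r; case: eqP => [e|_]; [by move: sn; rewrite -e eqxx | by rewrite mul0r].
case: (eqVneq t s) => [->|tns].
  rewrite mul1r !gapE //.
  have mn1 : mn x' s = 0.
    apply: le_anti; rewrite -{1}x'u mn_le //=.
    by have [a _ ->] := mn_att h' sn; case/andP: (h' a).
  have mx1 : forall y, (forall i, i \notin s -> y i = 0) -> mx y s = 0.
    move=> y yo; apply: bigmax_eq_id => i; rewrite inE => /yo ->; exact: lexx.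
  rewrite (mn_shift h h' sn xi) mn1 !mx1 // !subr0 add0r.
  by rewrite maxxx add0r; apply/max_idPr; exact: ltW.
rewrite mul0r addr0.
case: (boolP (t \subset s)) => [ts|/subsetPn [a at0 aS]]; last first.
  by rewrite (gap_zero_of h at0 (xo _ aS)) (gap_zero_of h' at0 (x'o _ aS)).
have [w ws wt] : exists2 w, w \in s & w \notin t.
  have : t \proper s by rewrite properEneq tns ts.
  by case/properP => _ [w ws wt]; exists w.
rewrite !gapE // (mn_shift h h' tn (fun i it => xi i (subsetP ts i it))).
have -> : mx x t = mx x' t + m.
  apply: le_anti; apply/andP; split.
    case: (mx_att t h) => [->|[j jt ->]].
      by rewrite addr_ge0 ?mx_ge0 ?ltW.
    case: (boolP (j \in s)) => js; first by rewrite xi // lerD2r mx_ge.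
    by rewrite xo // addr_ge0 ?mx_ge0 ?ltW.
  case: (mx_att t h') => [->|[j jt ->]].
    by rewrite add0r (le_trans _ (mx_ge x wt)) // xi // lerDr; case/andP: (h' w).
  case: (boolP (j \in s)) => js; first by rewrite -xi // mx_ge.
  by rewrite x'o // add0r (le_trans _ (mx_ge x wt)) // xi // lerDr; case/andP: (h' w).
by rewrite opprD addrACA subrr addr0.
Qed.


Definition supp x : {set 'I_n} := [set i | x i != 0].

Lemma gap_null x t : in01 x -> (forall i, x i = 0) -> gap x t = 0.
Proof.
move=> h x0; case: (eqVneq t set0) => [->|/set0Pn [a at0]]; first exact: gap0.
exact: gap_zero_of h at0 (x0 a).
Qed.

Lemma sum_eq_pick (T : finType) (P : pred T) (s : T) (m : R) :
  \sum_(t | P t) (t == s)%:R * m = (P s)%:R * m.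
Proof.
case: (boolP (P s)) => Ps.
  rewrite (bigD1 s) //= eqxx mul1r big1 ?addr0 // => t /andP [_ /negbTE ->].
  by rewrite mul0r.
rewrite mul0r big1 // => t Pt; case: eqP => [e|_]; last by rewrite mul0r.
by move: Ps; rewrite -e Pt.
Qed.

Lemma layer_cake x : in01 x -> forall i, \sum_(t : {set 'I_n} | i \in t) gap x t = x i.
Proof.
suff H : forall k x, (#|supp x| <= k)%N -> in01 x -> forall i,
    \sum_(t : {set 'I_n} | i \in t) gap x t = x i by move=> h; exact: H.
elim=> [|k IH] {}x hk h i.
  have x0 : forall i, x i = 0.
    move=> j; apply/eqP/negPn/negP => xj.
    by move: hk; rewrite leqn0 cards_eq0 => /eqP e; move: (in_set0 j); rewrite -e inE xj.
  by rewrite big1 ?x0 // => t _; apply: gap_null.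
case: (eqVneq (supp x) set0) => [e|sn].
  have x0 : forall i, x i = 0.
    by move=> j; apply/eqP/negPn/negP => xj; move: (in_set0 j); rewrite -e inE xj.
  by rewrite big1 ?x0 // => t _; apply: gap_null.
set s := supp x in sn hk *.
have [u us mu] := mn_att h sn.
set m := mn x s in mu.
have m0 : 0 < m.
  by rewrite mu lt_def; move: us; rewrite inE => ->; case/andP: (h u).
pose x' := fun i => x i - (i \in s)%:R * m.
have x'o : forall i, i \notin s -> x' i = 0.
  move=> j js; rewrite /x' (negbTE js) mul0r subr0.
  by apply/eqP/negPn; move: js; rewrite inE.
have h' : in01 x'.
  move=> j; rewrite /x'; case: (boolP (j \in s)) => js.
    rewrite mul1r subr_ge0 (mn_le _ js) /=; case/andP: (h j) => _ xj1.
    by rewrite (le_trans _ xj1) // lerBlDr lerDl ltW.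
  by rewrite mul0r subr0; exact: h.
have x'u : x' u = 0 by rewrite /x' us mul1r mu subrr.
have ex : forall i, x i = x' i + (i \in s)%:R * m by move=> j; rewrite /x' subrK.
have hk' : (#|supp x'| <= k)%N.
  have hsub : supp x' \subset s :\ u.
    apply/subsetP => j; rewrite !inE => xj; apply/andP; split.
      by apply/eqP => e; move: xj; rewrite e x'u eqxx.
    by apply/negP => /eqP xj0; move: xj; rewrite x'o ?eqxx // inE xj0 eqxx.
  move: hk; rewrite (cardsD1 u s) us add1n ltnS => hk.
  exact: leq_trans (subset_leq_card hsub) hk.
under eq_bigr => t _ do rewrite (SL h h' sn x'o us x'u m0 ex t).
by rewrite big_split /= (IH x' hk' h' i) sum_eq_pick ex.
Qed.

Lemma chain_top (S : {set {set 'I_n}}) :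
  (forall s t, s \in S -> t \in S -> (s \subset t) || (t \subset s)) ->
  S != set0 -> exists2 s0, s0 \in S & forall t, t \in S -> t \subset s0.
Proof.
move=> ch /set0Pn [t0 t0S].
case: (@arg_maxP _ _ _ t0 (fun t => t \in S) (fun t => #|t|) t0S) => s0 s0S hmax.
exists s0 => // t tS; case/orP: (ch _ _ tS s0S) => // st.
have : s0 == t by rewrite eqEcard st /=; exact: hmax.
by move/eqP ->.
Qed.

Definition zsum (w : {set 'I_n} -> R) : 'I_n -> R :=
  fun i => \sum_t w t * (i \in t)%:R.

Lemma chain_gap (w : {set 'I_n} -> R) : (forall t, 0 <= w t) -> w set0 = 0 ->
  (forall s t, w s != 0 -> w t != 0 -> (s \subset t) || (t \subset s)) ->
  in01 (zsum w) -> forall t, gap (zsum w) t = w t.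
Proof.
suff H : forall k (w : {set 'I_n} -> R), (#|[set t | (w t != 0)%R]| <= k)%N -> (forall t, 0 <= w t) ->
  w set0 = 0 ->
  (forall s t, w s != 0 -> w t != 0 -> (s \subset t) || (t \subset s)) ->
  in01 (zsum w) -> forall t, gap (zsum w) t = w t by move=> *; exact: H.
elim=> [|k IH] {}w hk wnn w0 ch h t.
  have wz : forall t, w t = 0.
    move=> j; apply/eqP/negPn/negP => xj.
    by move: hk; rewrite leqn0 cards_eq0 => /eqP e; move: (in_set0 j); rewrite -e inE xj.
  rewrite wz; apply: gap_null => // i; rewrite /zsum big1 // => j _.
  by rewrite wz mul0r.
set S := [set t | w t != 0] in hk.
case: (eqVneq S set0) => [e|Sn].
  have wz : forall t, w t = 0.
    by move=> j; apply/eqP/negPn/negP => xj; move: (in_set0 j); rewrite -e inE xj.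
  rewrite wz; apply: gap_null => // i; rewrite /zsum big1 // => j _.
  by rewrite wz mul0r.
have chS : forall s t, s \in S -> t \in S -> (s \subset t) || (t \subset s).
  by move=> s' t'; rewrite !inE; exact: ch.
have [s sS stop] := chain_top chS Sn.
have ws : w s != 0 by move: sS; rewrite inE.
have sn : s != set0 by apply/eqP => e; move: ws; rewrite e w0 eqxx.
set m := w s.
have m0 : 0 < m by rewrite lt_def ws wnn.
pose w' := fun t => if t == s then 0 else w t.
have w'0 : forall t, 0 <= w' t by move=> j; rewrite /w'; case: ifP.
have w'e : w' set0 = 0 by rewrite /w'; case: ifP.
have w'S : forall t, w' t != 0 -> t \in S :\ s.
  by move=> j; rewrite /w' !inE; case: (eqVneq j s) => [_|_] /=; rewrite ?eqxx.
have ch' : forall s1 t1, w' s1 != 0 -> w' t1 != 0 -> (s1 \subset t1) || (t1 \subset s1).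
  move=> s1 t1 /w'S; rewrite !inE => /andP [_ a] /w'S; rewrite !inE => /andP [_ b].
  exact: ch.
have hk' : (#|[set t | (w' t != 0)%R]| <= k)%N.
  have hsub : [set t | w' t != 0] \subset S :\ s by apply/subsetP => j; rewrite inE; exact: w'S.
  move: hk; rewrite (cardsD1 s S) sS add1n ltnS => hk.
  exact: leq_trans (subset_leq_card hsub) hk.
have ex : forall i, zsum w i = zsum w' i + (i \in s)%:R * m.
  move=> i; rewrite /zsum (bigD1 s) //= [in RHS](bigD1 s) //= /w' eqxx mul0r add0r addrC.
  congr (_ + _); last by rewrite mulrC.
  by apply: eq_bigr => j /negbTE ->.
have z'o : forall i, i \notin s -> zsum w' i = 0.
  move=> i is0; rewrite /zsum big1 // => j _.
  case: (eqVneq (w' j) 0) => [->|/w'S]; first by rewrite mul0r.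
  rewrite inE => /andP [_ jS].
  by rewrite (contraNF (fun ij => subsetP (stop j jS) i ij) is0) mulr0.
have z'ge : forall i, 0 <= zsum w' i.
  by move=> i; apply: sumr_ge0 => j _; rewrite mulr_ge0 ?ler0n.
have h' : in01 (zsum w').
  move=> i; rewrite z'ge /=; case/andP: (h i) => _ h1; apply: le_trans h1.
  by rewrite ex lerDl mulr_ge0 ?ler0n // ltW.
have [u us z'u] : exists2 u, u \in s & zsum w' u = 0.
  case: (eqVneq (S :\ s) set0) => [e|S'n].
    have [u us] := set0Pn _ sn; exists u => //; rewrite /zsum big1 // => j _.
    case: (eqVneq (w' j) 0) => [->|/w'S]; first by rewrite mul0r.
    by rewrite e inE.
  have chS' : forall a b, a \in S :\ s -> b \in S :\ s -> (a \subset b) || (b \subset a).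
    by move=> a b /setD1P [_ aS] /setD1P [_ bS]; exact: chS.
  have [s1 /setD1P [s1s s1S] s1top] := chain_top chS' S'n.
  have : s1 \proper s by rewrite properEneq s1s stop.
  case/properP => _ [u us us1]; exists u => //; rewrite /zsum big1 // => j _.
  case: (eqVneq (w' j) 0) => [->|/w'S jS]; first by rewrite mul0r.
  by rewrite (contraNF (fun ij => subsetP (s1top j jS) u ij) us1) mulr0.
rewrite (SL h h' sn z'o us z'u m0 ex t) (IH w' hk' w'0 w'e ch' h' t) /w'.
by case: eqP => [->|_]; rewrite ?mul1r ?add0r ?mul0r ?addr0.
Qed.

End Gap.


Section Comb.
Variable n : nat.
Variable a : 'I_n -> 'I_n -> bool.
Hypothesis asym : forall u v, a u v = a v u.
Implicit Types (s t : {set 'I_n}).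

Definition CN s : {set 'I_n} := [set v | [forall u in s, a u v]].
Definition cl s := CN (CN s).

Lemma CNP s v : reflect (forall u, u \in s -> a u v) (v \in CN s).
Proof. by rewrite inE; apply: (iffP forall_inP). Qed.

Lemma CN_anti s t : s \subset t -> CN t \subset CN s.
Proof.
move=> st; apply/subsetP => v /CNP h; apply/CNP => u us; apply: h.
exact: (subsetP st).
Qed.

Lemma sub_CNCN s : s \subset CN (CN s).
Proof. by apply/subsetP => u us; apply/CNP => v /CNP h; rewrite asym h. Qed.

Lemma sub_cl s : s \subset cl s.
Proof. exact: sub_CNCN. Qed.

Lemma cl_mono s t : s \subset t -> cl s \subset cl t.
Proof. by move=> st; apply: CN_anti; apply: CN_anti. Qed.

Lemma CN_cl s : CN (cl s) = CN s.
Proof.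
apply/eqP; rewrite eqEsubset sub_CNCN andbT.
apply: CN_anti; exact: sub_cl.
Qed.

Lemma cl_idem s : cl (cl s) = cl s.
Proof. by rewrite /cl -/(cl s) CN_cl. Qed.

Definition face s := CN s != set0.

Lemma face_cl s : face s -> face (cl s).
Proof. by rewrite /face CN_cl. Qed.

Lemma face_sub s t : t \subset s -> face s -> face t.
Proof.
move=> ts /set0Pn [v vs]; apply/set0Pn; exists v.
exact: (subsetP (CN_anti ts)).
Qed.

Definition noK j k := ~ exists S T : {set 'I_n},
  [/\ #|S| = j, #|T| = k & forall u v, u \in S -> v \in T -> a u v].

Lemma sub_card (A : {set 'I_n}) k : (k <= #|A|)%N -> exists2 B : {set 'I_n}, B \subset A & #|B| = k.
Proof.
move=> kA.
have : (0 < #|[set B : {set 'I_n} | B \subset A & #|B| == k]|)%N by rewrite cards_draws bin_gt0.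
case/card_gt0P => B; rewrite inE => /andP [BA /eqP Bk]; by exists B.
Qed.

Lemma inord_pred_inj m x y : (0 < x)%N -> (0 < y)%N -> (x <= m)%N -> (y <= m)%N ->
  (inord x.-1 : 'I_m.-1.+1) = inord y.-1 -> x = y.
Proof.
move=> x0 y0 xm ym /(congr1 (@nat_of_ord _)); rewrite !inordK; try lia.
Qed.

Lemma chain_bound j k (F : {set {set 'I_n}}) : (0 < j)%N -> (0 < k)%N -> noK j k ->
  (forall s, s \in F -> [/\ s != set0, cl s = s & face s]) ->
  (forall s t, s \in F -> t \in F -> (s \subset t) || (t \subset s)) ->
  (#|F| <= j + k - 2)%N.
Proof.
move=> j0 k0 nK hF ch.
pose P := [set s in F | (#|s| < j)%N].
pose Q := [set s in F | ~~ (#|s| < j)%N].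
have eqc : forall s t, s \in F -> t \in F -> #|s| = #|t| -> s = t.
  move=> s t sF tF e; case/orP: (ch _ _ sF tF) => st.
    by apply/eqP; rewrite eqEcard st e leqnn.
  by apply/eqP; rewrite eq_sym eqEcard st e leqnn.
have cP : (#|P| <= j.-1)%N.
  pose f := fun s : {set 'I_n} => (inord (#|s|).-1 : 'I_j.-1.+1).
  have fi : {in P &, injective f}.
    move=> s t; rewrite !inE => /andP [sF sj] /andP [tF tj] e.
    have s0 : (0 < #|s|)%N by rewrite card_gt0; case: (hF s sF).
    have t0 : (0 < #|t|)%N by rewrite card_gt0; case: (hF t tF).
    apply: eqc => //; apply: (inord_pred_inj (m := j)); try lia; exact e.
  rewrite -(card_in_imset fi).
  have : (#|f @: P| <= #|[set~ (ord_max : 'I_j.-1.+1)]|)%N.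
    apply: subset_leq_card; apply/subsetP => i /imsetP [s sP ->].
    move: sP; rewrite inE => /andP [sF sj].
    have s0 : (0 < #|s|)%N by rewrite card_gt0; case: (hF s sF).
    rewrite !inE; apply/eqP => /(congr1 (@nat_of_ord _)); rewrite /= inordK; lia.
  move/leq_trans; apply.
  by rewrite cardsC1 card_ord.
have cQ : (#|Q| <= k.-1)%N.
  have bnd : forall s, s \in Q -> (0 < #|CN s| < k)%N.
    move=> s; rewrite inE => /andP [sF sj]; case: (hF s sF) => _ _ fs.
    rewrite card_gt0; move: (fs); rewrite /face => -> /=; rewrite ltnNge; apply/negP => kc.
    apply: nK; rewrite -leqNgt in sj.
    have [S Ss Sc] := sub_card sj; have [T Ts Tc] := sub_card kc.
    exists S, T; split=> // u v uS vT.
    exact: (CNP _ _ (subsetP Ts v vT)) (subsetP Ss u uS).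
  pose f := fun s : {set 'I_n} => (inord (#|CN s|).-1 : 'I_k.-1.+1).
  have fi : {in Q &, injective f}.
    move=> s t sQ tQ e.
    have := bnd s sQ; have := bnd t tQ.
    move: sQ tQ; rewrite !inE => /andP [sF _] /andP [tF _] /andP [t0 tk] /andP [s0 sk].
    have ec : #|CN s| = #|CN t|.
      apply: (inord_pred_inj (m := k)); try lia; exact e.
    have eCN : CN s = CN t.
      case/orP: (ch _ _ sF tF) => st.
        by apply/eqP; rewrite eq_sym eqEcard (CN_anti st) ec leqnn.
      by apply/eqP; rewrite eqEcard (CN_anti st) ec leqnn.
    case: (hF s sF) => _ cs _; case: (hF t tF) => _ ct _.
    by rewrite -cs -ct /cl eCN.
  rewrite -(card_in_imset fi).
  have : (#|f @: Q| <= #|[set~ (ord_max : 'I_k.-1.+1)]|)%N.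
    apply: subset_leq_card; apply/subsetP => i /imsetP [s sQ ->].
    have /andP [c0 ck] := bnd s sQ.
    rewrite !inE; apply/eqP => /(congr1 (@nat_of_ord _)); rewrite /= inordK; lia.
  move/leq_trans; apply.
  by rewrite cardsC1 card_ord.
have -> : #|F| = (#|P| + #|Q|)%N.
  rewrite -(cardsID [set s : {set 'I_n} | (#|s| < j)%N] F); congr (_ + _)%N.
    by apply: eq_card => s; rewrite !inE andbC.
  by apply: eq_card => s; rewrite !inE andbC.
lia.
Qed.

End Comb.


Section Prob.
Variable R : realFieldType.
Variable T : finType.
Variable p : R.

Definition wt (U E : {set T}) : R := p ^+ #|E| * (1 - p) ^+ (#|U| - #|E|).

Lemma sum_sup (U F : {set T}) : F \subset U ->
  \sum_(E : {set T} | (E \subset U) && (F \subset E)) wt U E = p ^+ #|F|.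
Proof.
move: {2}#|U :\: F| (leqnn #|U :\: F|) => k; elim: k U F => [|k IH] U F hk FU.
  have eUF : U = F.
    apply/eqP; rewrite eqEsubset FU andbT; apply/subsetP => x xU.
    apply/negPn/negP => xF; move: hk; rewrite leqn0 cards_eq0 => /eqP e.
    by have := in_set0 x; rewrite -e inE xF xU.
  subst U; rewrite (eq_bigl (fun E => E == F)).
    by rewrite big_pred1_eq /wt subnn expr0 mulr1.
  by move=> E; rewrite eq_sym eqEsubset andbC.
case: (eqVneq (U :\: F) set0) => [e|/set0Pn [x]].
  have eUF : U = F.
    apply/eqP; rewrite eqEsubset FU andbT; apply/subsetP => y yU.
    apply/negPn/negP => yF; by have := in_set0 y; rewrite -e inE yF yU.
  subst U; rewrite (eq_bigl (fun E => E == F)).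
    by rewrite big_pred1_eq /wt subnn expr0 mulr1.
  by move=> E; rewrite eq_sym eqEsubset andbC.
rewrite inE => /andP [xF xU].
set U' := U :\ x.
have FU' : F \subset U'.
  apply/subsetP => y yF; rewrite !inE (subsetP FU y yF) andbT.
  by apply/eqP => e; move: xF; rewrite -e yF.
have hk' : (#|U' :\: F| <= k)%N.
  have e : U :\: F = x |: (U' :\: F).
    apply/setP => y; rewrite !inE; case: (eqVneq y x) => [->|_] //=.
    by rewrite xF xU.
  have xn : x \notin U' :\: F by rewrite !inE eqxx /= andbF.
  move: hk; rewrite e cardsU1 xn /=; lia.
have cU : #|U| = #|U'|.+1 by rewrite (cardsD1 x U) xU.
rewrite (bigID (fun E : {set T} => x \in E)) /=.
have -> : \sum_(E : {set T} | ((E \subset U) && (F \subset E)) && ~~ (x \in E)) wt U E =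
    (1 - p) * p ^+ #|F|.
  rewrite -(IH U' F hk' FU') mulr_sumr; apply: eq_big => E.
    apply/idP/idP => [/andP [/andP [EU FE] xE]|/andP [EU' FE]].
      rewrite FE andbT; apply/subsetP => y yE; rewrite !inE (subsetP EU y yE) andbT.
      by apply/eqP => e; move: xE; rewrite -e yE.
    have xE : x \notin E by apply/negP => /(subsetP EU'); rewrite !inE eqxx.
    rewrite FE xE andbT andbT; apply: (subset_trans EU'); exact: subsetDl.
  move=> /andP [/andP [EU _] xE].
  have EU' : E \subset U'.
    apply/subsetP => y yE; rewrite !inE (subsetP EU y yE) andbT.
    by apply/eqP => e; move: xE; rewrite -e yE.
  rewrite /wt cU subSn ?exprS; last exact: subset_leq_card.
  by rewrite mulrCA.
have -> : \sum_(E : {set T} | ((E \subset U) && (F \subset E)) && (x \in E)) wt U E =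
    p * p ^+ #|F|.
  rewrite (reindex_onto (fun E => x |: E) (fun E => E :\ x)); last first.
    by move=> E /andP [_ xE]; rewrite setD1K.
  rewrite -(IH U' F hk' FU') mulr_sumr; apply: eq_big => E.
    apply/idP/idP => [/andP [/andP [/andP [EU FE] _] /eqP e]|/andP [EU' FE]].
      rewrite -e; apply/andP; split.
        apply/subsetP => y; rewrite !inE => /andP [yx /orP [/eqP yx'|yE]].
          by rewrite yx' eqxx in yx.
        by rewrite yx /= (subsetP EU) // !inE yE orbT.
      apply/subsetP => y yF; have := subsetP FE y yF; rewrite !inE => ->; rewrite andbT.
      by apply/eqP => e'; move: xF; rewrite -e' yF.
    have xE : x \notin E by apply/negP => /(subsetP EU'); rewrite !inE eqxx.
    rewrite setU1K // eqxx setU11 !andbT; apply/andP; split.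
      apply/subsetP => y; rewrite !inE => /orP [/eqP ->|yE] //.
      by have := subsetP EU' y yE; rewrite !inE => /andP [].
    apply: subset_trans FE _; exact: subsetUr.
  move=> /andP [_ /eqP e].
  have xE : x \notin E by rewrite -e !inE eqxx.
  rewrite /wt cardsU1 xE add1n cU subSS exprS.
  by rewrite mulrA.
by rewrite -mulrDl addrC subrK mul1r.
Qed.

Lemma sum_all (U : {set T}) : \sum_(E : {set T} | E \subset U) wt U E = 1.
Proof.
rewrite -(expr0 p) -(cards0 T) -(sum_sup (sub0set U)).
by apply: eq_bigl => E; rewrite sub0set andbT.
Qed.

End Prob.


Section Topo.
Variable R : realType.

Lemma coord_cont n (i : 'I_n) : continuous (fun x : 'rV[R]_n => x ord0 i).
Proof.
move=> u A /nbhs_ballP [e /= e0 eA].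
apply/nbhs_ballP; exists e => //= v [_ uv]; apply: eA; exact: uv.
Qed.

Variable T : topologicalType.

Lemma bigmin_cont (I : Type) (s : seq I) (P : pred I) (c : R) (F : I -> T -> R) :
  (forall i, continuous (F i)) ->
  continuous (fun x => \big[Num.min/c]_(i <- s | P i) F i x).
Proof.
move=> hF; elim: s => [|i s IH].
  by under eq_fun => x do rewrite big_nil; exact: cst_continuous.
case: (boolP (P i)) => Pi.
  under eq_fun => x do rewrite big_cons Pi.
  by move=> x; apply: (@continuous_min R T (F i) _ x (hF i x) (IH x)).
by under eq_fun => x do rewrite big_cons (negbTE Pi).
Qed.

Lemma bigmax_cont (I : Type) (s : seq I) (P : pred I) (c : R) (F : I -> T -> R) :
  (forall i, continuous (F i)) ->
  continuous (fun x => \big[Num.max/c]_(i <- s | P i) F i x).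
Proof.
move=> hF; elim: s => [|i s IH].
  by under eq_fun => x do rewrite big_nil; exact: cst_continuous.
case: (boolP (P i)) => Pi.
  under eq_fun => x do rewrite big_cons Pi.
  by move=> x; apply: (@continuous_max R T (F i) _ x (hF i x) (IH x)).
by under eq_fun => x do rewrite big_cons (negbTE Pi).
Qed.

Lemma bigsum_cont (V : normedModType R) (I : Type) (s : seq I) (P : pred I)
  (F : I -> T -> V) : (forall i, continuous (F i)) ->
  continuous (fun x => \sum_(i <- s | P i) F i x).
Proof.
move=> hF; elim: s => [|i s IH].
  by under eq_fun => x do rewrite big_nil; exact: cst_continuous.
case: (boolP (P i)) => Pi.
  under eq_fun => x do rewrite big_cons Pi.
  by move=> x; apply: continuousD; [exact: hF | exact: IH].
by under eq_fun => x do rewrite big_cons (negbTE Pi).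
Qed.

End Topo.




Section Det.
Variable R : realType.
Variable n : nat.
Variable E : {set {set 'I_n}}.
Implicit Types (s t tau : {set 'I_n}) (x y : 'rV[R]_n).

Lemma asym : forall u v, adj E u v = adj E v u.
Proof. by move=> u v; rewrite /adj finset.setUC. Qed.

Local Notation CN := (CN (adj E)).
Local Notation cl := (cl (adj E)).
Local Notation face := (face (adj E)).

Lemma nbhdP s : (s \in nbhd_complex E) = face s.
Proof.
rewrite inE /face; apply/existsP/set0Pn => [[v hv]|[v hv]]; exists v.
  by rewrite inE.
by move: hv; rewrite inE.
Qed.

Definition xf (x : 'rV[R]_n) : 'I_n -> R := fun i => x ord0 i.
Definition G x t := gap (xf x) t.

Lemma sum_ind (t : {set 'I_n}) : \sum_i ((i \in t)%:R : R) = #|t|%:R.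
Proof.
rewrite (bigID (fun i => i \in t)) /= [X in _ + X]big1 ?addr0; last first.
  by move=> i /negbTE ->.
by under eq_bigr => i -> do []; rewrite sumr_const.
Qed.

Lemma sum_gap x : in01 (xf x) -> \sum_i xf x i = \sum_(t : {set 'I_n}) #|t|%:R * G x t.
Proof.
move=> h; under eq_bigr => i _ do rewrite -(layer_cake h i) big_mkcond /=.
rewrite exchange_big /=; apply: eq_bigr => t _.
rewrite -sum_ind mulr_suml; apply: eq_bigr => i _.
by case: (i \in t); rewrite ?mul1r ?mul0r.
Qed.

Definition X := realization (R:=R) (nbhd_complex E).

Lemma X_in01 x : X x -> in01 (xf x).
Proof.
case=> h0 [h1 _] i; rewrite /xf h0 /= -h1 (bigD1 i) //= lerDl.
by apply: sumr_ge0 => j _; exact: h0.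
Qed.


Definition coef x (s : {set 'I_n}) : R := G x s * #|s|%:R / #|cl s|%:R.
Definition wr x (t : {set 'I_n}) : R := \sum_(s : {set 'I_n} | cl s == t) coef x s.
Definition ind (t : {set 'I_n}) : 'rV[R]_n := \row_i ((i \in t)%:R : R).
Definition r x : 'rV[R]_n := \sum_(t : {set 'I_n}) wr x t *: ind t.
Definition Hf x (t : R) : 'rV[R]_n := (1 - t) *: x + t *: r x.
Definition A := fun y => X y /\ forall s, 0 < G y s -> cl s = s.

Lemma r_entry x i : r x ord0 i = zsum (wr x) i.
Proof. by rewrite /r summxE; apply: eq_bigr => t _; rewrite !mxE. Qed.

Lemma xf_r x : xf (r x) = zsum (wr x).
Proof. by apply: funext => i; rewrite /xf r_entry. Qed.

Lemma sum_nz (I : finType) (P : pred I) (F : I -> R) :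
  \sum_(i | P i) F i != 0 -> exists2 i, P i & F i != 0.
Proof.
move=> h; apply/exists_inP; apply: contraNT h; rewrite negb_exists_in => /forall_inP h.
by rewrite big1 // => i /h /negPn /eqP.
Qed.

Lemma sum_zsum (w : {set 'I_n} -> R) : \sum_i zsum w i = \sum_t w t * #|t|%:R.
Proof.
rewrite /zsum exchange_big /=; apply: eq_bigr => t _.
by rewrite -sum_ind mulr_sumr.
Qed.

Lemma cl_n0 s : s != set0 -> cl s != set0.
Proof.
move=> /set0Pn [u us]; apply/set0Pn; exists u.
exact: (subsetP (sub_cl asym s) u us).
Qed.

Lemma G_ge0 x s : 0 <= G x s.
Proof. exact: gap_ge0. Qed.

Lemma coef_ge0 x s : 0 <= coef x s.
Proof. by rewrite /coef divr_ge0 ?mulr_ge0 ?ler0n ?G_ge0. Qed.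

Lemma wr_ge0 x t : 0 <= wr x t.
Proof. by apply: sumr_ge0 => s _; exact: coef_ge0. Qed.

Lemma coef_nz x s : coef x s != 0 -> 0 < G x s.
Proof.
rewrite /coef lt_def G_ge0 andbT; apply: contraNN => /eqP ->.
by rewrite !mul0r.
Qed.

Lemma coef_card x s : coef x s * #|cl s|%:R = #|s|%:R * G x s.
Proof.
case: (eqVneq s set0) => [->|sn].
  by rewrite /coef /G gap0 !mul0r cards0 mulr0.
have c0 : (#|cl s|%:R : R) != 0.
  by rewrite pnatr_eq0 cards_eq0; exact: cl_n0.
by rewrite /coef mulfVK // mulrC.
Qed.

Lemma sum_r x : in01 (xf x) -> \sum_i zsum (wr x) i = \sum_i xf x i.
Proof.
move=> h; rewrite sum_zsum sum_gap //.
rewrite [RHS](partition_big (fun s => cl s) (fun _ => true)) //=.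
apply: eq_bigr => t _; rewrite /wr mulr_suml; apply: eq_bigr => s /eqP <-.
exact: coef_card.
Qed.

Lemma gap_sub x s : 0 < G x s -> s \subset [set i | x ord0 i != 0].
Proof.
move=> /gap_pos [_ h _]; apply/subsetP => i is0; rewrite inE.
by have := h i is0; rewrite lt_def => /andP [].
Qed.

Lemma Hf_entry x (t : R) i : Hf x t ord0 i = (1 - t) * x ord0 i + t * zsum (wr x) i.
Proof. by rewrite /Hf !mxE r_entry. Qed.

Lemma zsum_ge0 (w : {set 'I_n} -> R) i : (forall t, 0 <= w t) -> 0 <= zsum w i.
Proof. by move=> h; apply: sumr_ge0 => t _; rewrite mulr_ge0 ?ler0n. Qed.

Lemma H_X x (t : R) : X x -> 0 <= t <= 1 -> X (Hf x t).
Proof.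
move=> hx /andP [t0 t1]; have h := X_in01 hx.
case: hx => hx0 [hx1 hxs].
split; [|split].
- move=> i; rewrite Hf_entry addr_ge0 // mulr_ge0 ?subr_ge0 ?hx0 //.
  by apply: zsum_ge0 => s; exact: wr_ge0.
- under eq_bigr => i _ do rewrite Hf_entry.
  rewrite big_split /= -!mulr_sumr.
  have e := sum_r h; rewrite /xf in e; rewrite e hx1.
  by rewrite !mulr1 subrK.
- rewrite nbhdP; apply: (@face_sub _ _ (cl [set i | x ord0 i != 0])).
    apply/subsetP => i; rewrite inE Hf_entry => hi.
    case: (eqVneq (x ord0 i) 0) => [xi|xi]; last first.
      by apply: (subsetP (sub_cl asym _)); rewrite inE.
    move: hi; rewrite xi mulr0 add0r mulf_eq0 negb_or => /andP [_].
    move=> /sum_nz [tau _]; rewrite mulf_eq0 negb_or => /andP [/sum_nz [s /eqP cs cn]].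
    rewrite pnatr_eq0 eqb0 negbK => itau.
    apply: (subsetP (@cl_mono _ (adj E) _ _ (gap_sub (coef_nz cn)))).
    by rewrite cs.
  by apply: (face_cl asym); rewrite -nbhdP.
Qed.

Lemma r_A x : X x -> A (r x).
Proof.
move=> hx; have hX : X (r x).
  have := H_X hx (t:=1); rewrite /Hf subrr scale0r add0r scale1r; apply.
  by rewrite ler01 lexx.
split=> // tau; rewrite /G xf_r.
have h := X_in01 hX; rewrite xf_r in h.
have w0 : wr x set0 = 0.
  rewrite /wr big1 // => s /eqP cs.
  have : s == set0.
    by apply/eqP/setP => i; rewrite in_set0; apply/negP => /(subsetP (sub_cl asym s)); rewrite cs in_set0.
  by move/eqP ->; rewrite /coef /G gap0 !mul0r.
have ch : forall s t, wr x s != 0 -> wr x t != 0 -> (s \subset t) || (t \subset s).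
  move=> s1 t1 /sum_nz [u /eqP cu un] /sum_nz [v /eqP cv vn].
  rewrite -cu -cv; case/orP: (gap_chain (coef_nz un) (coef_nz vn)) => uv.
    by rewrite (@cl_mono _ (adj E) _ _ uv).
  by rewrite (@cl_mono _ (adj E) _ _ uv) orbT.
rewrite (chain_gap (wr_ge0 x) w0 ch h) => /gt_eqF /negbT /sum_nz [s /eqP <- _].
by rewrite (cl_idem asym).
Qed.

Lemma r_fix y : A y -> r y = y.
Proof.
case=> hX hcl; have h := X_in01 hX.
have ew : forall tau, wr y tau = G y tau.
  move=> tau; rewrite /wr.
  have e : forall s, cl s == tau -> coef y s = (s == tau)%:R * G y tau.
    move=> s /eqP cs; case: (boolP (0 < G y s)) => gs.
      have css := hcl s gs; rewrite css in cs; subst tau; rewrite eqxx mul1r.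
      have sn : (#|s|%:R : R) != 0.
        by rewrite pnatr_eq0 cards_eq0; case/gap_pos: gs.
      by rewrite /coef css mulfK.
    have g0 : G y s = 0 by apply/eqP; rewrite eq_le G_ge0 andbT leNgt.
    rewrite /coef g0 !mul0r; case: eqP => [<-|_]; by rewrite ?g0 ?mulr0 ?mul0r.
  rewrite (eq_bigr _ e) sum_eq_pick; case: (eqVneq (cl tau) tau) => [_|ct].
    by rewrite mul1r.
  rewrite mul0r; apply/esym/eqP; rewrite eq_le G_ge0 andbT leNgt.
  by apply/negP => /hcl; apply/eqP.
apply/rowP => i; rewrite r_entry /zsum.
under eq_bigr => t _ do rewrite ew.
transitivity (\sum_(t : {set 'I_n} | i \in t) G y t); last exact: (layer_cake h i).
by rewrite [RHS]big_mkcond /=; apply: eq_bigr => t _; case: (i \in t); rewrite ?mulr1 ?mulr0.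
Qed.


Lemma row_cont (T : topologicalType) p q (F : T -> 'M[R]_(p, q)) :
  (forall i j, continuous (fun z => F z i j)) -> continuous F.
Proof.
move=> h.
have -> : F = fun z => \sum_(i < p) \sum_(j < q) F z i j *: delta_mx i j.
  by apply: funext => z; exact: matrix_sum_delta.
apply: bigsum_cont => i; apply: bigsum_cont => j.
by move=> z; apply: continuousZr_tmp; exact: h.
Qed.

Lemma G_cont s : continuous (fun y => G y s).
Proof.
rewrite /G /gap; case: eqP => _; first exact: cst_continuous.
move=> y; apply: (@continuous_max R _ (fun=> 0) (fun y => mn (xf y) s - mx (xf y) s)).
  exact: cst_continuous.
apply: continuousB.
  by apply: (bigmin_cont (F := fun i y => y ord0 i)) => i; exact: coord_cont.
by apply: (bigmax_cont (F := fun i y => y ord0 i)) => i; exact: coord_cont.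
Qed.

Lemma r_cont : continuous r.
Proof.
apply: bigsum_cont => tau z; apply: continuousZr_tmp.
apply: bigsum_cont => s.
have -> : (fun y => coef y s) = (fun y => G y s * (#|s|%:R / #|cl s|%:R)).
  by apply: funext => y; rewrite /coef mulrA.
move=> y; apply: (@continuousM R _ (fun y => G y s) (fun=> #|s|%:R / #|cl s|%:R)).
  exact: G_cont.
exact: cst_continuous.
Qed.

Lemma H_cont : continuous (fun z : 'rV[R]_n * R => Hf z.1 z.2).
Proof.
move=> z; rewrite /Hf.
apply: (@continuousD R _ _ (fun z : 'rV[R]_n * R => (1 - z.2) *: z.1)
   (fun z : 'rV[R]_n * R => z.2 *: r z.1)).
  apply: (@continuousZ R _ _ (fun z : 'rV[R]_n * R => 1 - z.2) (fun z => z.1)).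
    apply: (@continuousB R R^o _ (fun=> 1) (fun z : 'rV[R]_n * R => z.2)).
      exact: cst_continuous.
    exact: cvg_snd.
  exact: cvg_fst.
apply: (@continuousZ R _ _ (fun z : 'rV[R]_n * R => z.2) (fun z => r z.1)).
  exact: cvg_snd.
apply: continuous_comp; first exact: cvg_fst.
exact: r_cont.
Qed.


Definition m := #|{: {set 'I_n}}|.
Definition sv (l : 'I_m) : {set 'I_n} := enum_val l.
Definition idx (t : {set 'I_n}) : 'I_m := enum_rank t.

Lemma svK : cancel sv idx. Proof. exact: enum_valK. Qed.
Lemma idxK : cancel idx sv. Proof. exact: enum_rankK. Qed.

Lemma sum_sv (F : {set 'I_n} -> R) : \sum_(l : 'I_m) F (sv l) = \sum_t F t.
Proof.
rewrite (reindex sv) //; exists idx => l _; [exact: svK | exact: idxK].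
Qed.

Lemma sum_idx (F : 'I_m -> R) : \sum_(t : {set 'I_n}) F (idx t) = \sum_l F l.
Proof.
rewrite (reindex idx) //; exists sv => l _; [exact: idxK | exact: svK].
Qed.

Definition Dc : {set {set 'I_m}} :=
  [set S : {set 'I_m} | [forall l in S, (sv l != set0) && (cl (sv l) == sv l) && face (sv l)]
     && [forall l in S, forall l' in S, (sv l \subset sv l') || (sv l' \subset sv l)]].

Lemma DcP S : S \in Dc ->
  (forall l, l \in S -> [/\ sv l != set0, cl (sv l) = sv l & face (sv l)]) /\
  (forall l l', l \in S -> l' \in S -> (sv l \subset sv l') || (sv l' \subset sv l)).
Proof.
rewrite inE => /andP [/forall_inP h1 /forall_inP h2]; split.
  by move=> l /h1 /andP [/andP [a /eqP b] c].
by move=> l l' /h2 /forall_inP h /h.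
Qed.

Lemma Dc_simpl : simplicial_complex Dc.
Proof.
move=> S T SD TS; case/DcP: SD => h1 h2; rewrite inE; apply/andP; split.
  apply/forall_inP => l /(subsetP TS) /h1 [a b c]; by rewrite a b eqxx c.
apply/forall_inP => l lT; apply/forall_inP => l' l'T.
by apply: h2; apply: (subsetP TS).
Qed.

Lemma Dc_dim j k : (0 < j)%N -> (0 < k)%N -> noK (adj E) j k ->
  dim_le_succ Dc (j + k - 2).
Proof.
move=> j0 k0 nK S SD; case/DcP: SD => h1 h2.
rewrite -(card_imset S (can_inj svK)).
apply: (chain_bound j0 k0 nK).
  by move=> t /imsetP [l lS ->]; exact: h1.
by move=> s t /imsetP [l lS ->] /imsetP [l' l'S ->]; exact: h2.
Qed.

Definition RD := realization (R:=R) Dc.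

Definition fmap y : 'rV[R]_m := \row_l (#|sv l|%:R * G y (sv l)).
Definition wz (z : 'rV[R]_m) (t : {set 'I_n}) : R := z ord0 (idx t) / #|t|%:R.
Definition gmap (z : 'rV[R]_m) : 'rV[R]_n := \row_i zsum (wz z) i.

Lemma xf_g z : xf (gmap z) = zsum (wz z).
Proof. by apply: funext => i; rewrite /xf mxE. Qed.

Lemma RD_supp z l : RD z -> z ord0 l != 0 -> l \in [set l | z ord0 l != 0]%SET.
Proof. by move=> _ h; rewrite inE. Qed.

Lemma RD_empty z l : RD z -> sv l = set0 -> z ord0 l = 0.
Proof.
case=> _ [_ hD] e; apply/eqP/negPn/negP => zl.
case/DcP: hD => h1 _; have := h1 l; rewrite inE => /(_ zl) [].
by rewrite e eqxx.
Qed.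

Lemma fmap_A y : A y -> RD (fmap y).
Proof.
case=> hX hcl; have h := X_in01 hX; split; [|split].
- by move=> l; rewrite mxE mulr_ge0 ?ler0n ?G_ge0.
- under eq_bigr => l _ do rewrite mxE.
  rewrite (sum_sv (fun t => #|t|%:R * G y t)) -sum_gap //.
  by case: hX => _ [].
- have gp : forall l, fmap y ord0 l != 0 -> 0 < G y (sv l).
    move=> l; rewrite mxE mulf_eq0 negb_or => /andP [_ g].
    by rewrite lt_def g G_ge0.
  rewrite inE; apply/andP; split.
    apply/forall_inP => l; rewrite inE => /gp g.
    case/gap_pos: (g) => -> _ _; rewrite (hcl _ g) eqxx /=.
    apply: (@face_sub _ _ [set i | y ord0 i != 0]); first exact: gap_sub.
    by rewrite -nbhdP; case: hX => _ [].
  apply/forall_inP => l; rewrite inE => /gp g; apply/forall_inP => l'.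
  rewrite inE => /gp g'; exact: gap_chain g g'.
Qed.

Lemma wz_ge0 z t : RD z -> 0 <= wz z t.
Proof. by case=> h _; rewrite /wz divr_ge0 ?ler0n. Qed.

Lemma wz_nz z t : RD z -> wz z t != 0 -> idx t \in [set l | z ord0 l != 0]%SET.
Proof. by move=> _; rewrite /wz mulf_eq0 negb_or inE => /andP []. Qed.

Lemma wz_card z t : RD z -> wz z t * #|t|%:R = z ord0 (idx t).
Proof.
move=> hz; case: (eqVneq t set0) => [e|tn].
  by rewrite e cards0 mulr0 (RD_empty hz) // idxK.
by rewrite /wz mulfVK // pnatr_eq0 cards_eq0.
Qed.

Lemma gmap_A z : RD z -> A (gmap z).
Proof.
move=> hz; have hz' := hz; case: hz' => hz0 [hz1 hD].
case/DcP: hD => h1 h2.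
have w0 : wz z set0 = 0 by rewrite /wz cards0 invr0 mulr0.
have ch : forall s t, wz z s != 0 -> wz z t != 0 -> (s \subset t) || (t \subset s).
  move=> s t /(wz_nz hz) hs /(wz_nz hz) ht; have := h2 _ _ hs ht.
  by rewrite !idxK.
have hsum : \sum_i zsum (wz z) i = 1.
  rewrite sum_zsum (eq_bigr _ (fun t _ => wz_card t hz)).
  by rewrite (sum_idx (fun l => z ord0 l)).
have hX : X (gmap z).
  split; [|split].
  - by move=> i; rewrite mxE; apply: zsum_ge0 => t; exact: wz_ge0.
  - by under eq_bigr => i _ do rewrite mxE.
  - have Sn : [set t | wz z t != 0]%SET != set0.
      apply/negP => /eqP e; move: hsum; rewrite big1 => [/eqP|i _].
        by rewrite eq_sym oner_eq0.
      rewrite /zsum big1 // => t _.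
      have -> : wz z t = 0.
        by apply/eqP/negPn/negP => wn; have := in_set0 t; rewrite -e inE wn.
      by rewrite mul0r.
    have chS : forall s t, s \in [set t | wz z t != 0]%SET -> t \in [set t | wz z t != 0]%SET ->
        (s \subset t) || (t \subset s).
      by move=> s t; rewrite !inE; exact: ch.
    have [s0 s0S s0top] := chain_top chS Sn.
    rewrite nbhdP; apply: (@face_sub _ _ s0).
      apply/subsetP => i; rewrite inE mxE => /sum_nz [t _].
      rewrite mulf_eq0 negb_or pnatr_eq0 eqb0 negbK => /andP [wt it].
      by apply: (subsetP (s0top t _)); rewrite // inE.
    move: s0S; rewrite inE => /(wz_nz hz) /h1 [_ _].
    by rewrite idxK.
have h := X_in01 hX; rewrite xf_g in h.
split=> // tau; rewrite /G xf_g (chain_gap (fun t => wz_ge0 t hz) w0 ch h).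
move=> /gt_eqF /negbT /(wz_nz hz) /h1 [_]; by rewrite idxK.
Qed.

Lemma gf y : A y -> gmap (fmap y) = y.
Proof.
case=> hX _; have h := X_in01 hX.
apply/rowP => i; rewrite mxE /zsum /wz.
transitivity (\sum_(t : {set 'I_n}) G y t * (i \in t)%:R).
  apply: eq_bigr => t _; rewrite mxE idxK; congr (_ * _).
  case: (eqVneq t set0) => [->|tn]; first by rewrite /G gap0 mulr0 mul0r.
  by rewrite mulrC mulKf // pnatr_eq0 cards_eq0.
transitivity (\sum_(t : {set 'I_n} | i \in t) G y t); last exact: (layer_cake h i).
rewrite [RHS]big_mkcond /=; apply: eq_bigr => t _.
by case: (i \in t); rewrite ?mulr1 ?mulr0.
Qed.

Lemma fg z : RD z -> fmap (gmap z) = z.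
Proof.
move=> hz; have [hX _] := gmap_A hz; have h := X_in01 hX.
rewrite xf_g in h.
have hz' := hz; have [hz0 [hz1 hD]] := hz; case/DcP: hD => h1 h2.
have w0 : wz z set0 = 0 by rewrite /wz cards0 invr0 mulr0.
have ch : forall s t, wz z s != 0 -> wz z t != 0 -> (s \subset t) || (t \subset s).
  move=> s t /(wz_nz hz') hs /(wz_nz hz') ht; have := h2 _ _ hs ht.
  by rewrite !idxK.
apply/rowP => l; rewrite mxE /G xf_g (chain_gap (fun t => wz_ge0 t hz') w0 ch h).
rewrite mulrC wz_card // svK.
by congr (z _ l); apply: val_inj.
Qed.

Lemma f_cont : continuous fmap.
Proof.
apply: row_cont => i l; rewrite /fmap.
under eq_fun => y do rewrite mxE.
move=> y; apply: (@continuousM R _ (fun=> #|sv l|%:R) (fun y => G y (sv l))).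
  exact: cst_continuous.
exact: G_cont.
Qed.

Lemma g_cont : continuous gmap.
Proof.
apply: row_cont => i j; rewrite /gmap.
under eq_fun => y do rewrite mxE.
apply: bigsum_cont => t y.
apply: (@continuousM R _ (fun z : 'rV[R]_m => wz z t) (fun=> (j \in t)%:R)); last exact: cst_continuous.
apply: (@continuousM R _ (fun z : 'rV[R]_m => z ord0 (idx t)) (fun=> #|t|%:R^-1)); last exact: cst_continuous.
exact: coord_cont.
Qed.


Theorem det_main j k : (0 < j)%N -> (0 < k)%N -> noK (adj E) j k ->
  sdr_onto_complex_dim R E (j + k - 2).
Proof.
move=> j0 k0 nK.
exists A; split.
  split; first by move=> y [].
  exists (fun z => Hf z.1 z.2); split; [|split; [|split; [|split]]].
  - apply: continuous_subspaceT => z; exact: H_cont.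
  - move=> x t hx ht; apply: H_X hx _.
    by move: ht; rewrite /= in_itv /=.
  - by move=> x hx /=; rewrite /Hf subr0 scale1r scale0r addr0.
  - by move=> x hx /=; rewrite /Hf subrr scale0r add0r scale1r; exact: r_A.
  - by move=> y t hy ht /=; rewrite /Hf r_fix // -scalerDl subrK scale1r.
exists m, Dc; split; first exact: Dc_simpl.
split; first exact: Dc_dim.
exists fmap, gmap; split; [|split; [|split; [|split; [|split]]]].
- apply: continuous_subspaceT; exact: f_cont.
- apply: continuous_subspaceT; exact: g_cont.
- exact: fmap_A.
- exact: gmap_A.
- exact: gf.
- exact: fg.
Qed.

End Det.



Section Final.
Variable R : realType.
Variable n : nat.
Variable p : R.
Hypothesis p01 : 0 <= p <= 1.

Definition w (E : {set {set 'I_n}}) : R := wt p (pairs n) E.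

Lemma w_ge0 E : 0 <= w E.
Proof.
case/andP: p01 => p0 p1.
by rewrite /w /wt mulr_ge0 // exprn_ge0 // subr_ge0.
Qed.

Lemma sub_sum (P Q : pred {set {set 'I_n}}) (F : {set {set 'I_n}} -> R) :
  (forall E, 0 <= F E) -> (forall E, P E -> Q E) ->
  \sum_(E | P E) F E <= \sum_(E | Q E) F E.
Proof.
move=> F0 PQ; rewrite [X in _ <= X](bigID P) /=.
have -> : \sum_(E | Q E && P E) F E = \sum_(E | P E) F E.
  by apply: eq_bigl => E; case: (boolP (P E)) => PE; rewrite ?andbT ?andbF // PQ.
by rewrite lerDl sumr_ge0.
Qed.

Lemma gnp_le1 (P : {set {set 'I_n}} -> Prop) : gnp_prob p P <= 1.
Proof.
rewrite /gnp_prob -[leRHS](sum_all p (pairs n)).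
apply: (@sub_sum (fun E => is_graph E && `[< P E >]) (fun E => E \subset pairs n)
  (fun E => wt p (pairs n) E)) => [E|E /andP [] //]; exact: w_ge0.

Qed.

Lemma gnp_compl (P : {set {set 'I_n}} -> Prop) :
  1 - gnp_prob p P = \sum_(E | is_graph E && ~~ `[< P E >]) w E.
Proof.
rewrite -[X in X - _](sum_all p (pairs n)) (bigID (fun E => `[< P E >])) /= addrC addrK.
by apply: eq_bigl => E.
Qed.

Definition FST (S T : {set 'I_n}) : {set {set 'I_n}} :=
  [set [set pr.1; pr.2] | pr in setX S T].

Lemma FST_card (S T : {set 'I_n}) : FST S T \subset pairs n -> #|FST S T| = (#|S| * #|T|)%N.
Proof.
move=> Fp.
have dis : forall u, u \in S -> u \in T -> False.
  move=> u uS uT.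
  have : [set u; u] \in FST S T by apply/imsetP; exists (u, u) => //; rewrite inE uS uT.
  by move/(subsetP Fp); rewrite inE finset.setUid cards1.
rewrite /FST card_in_imset ?cardsX //.
move=> [a b] [a' b']; rewrite !inE /= => /andP [aS bT] /andP [a'S b'T] e.
have ha : a \in [set a'; b'] by rewrite -e !inE eqxx.
have hb : b \in [set a'; b'] by rewrite -e !inE eqxx orbT.
move: ha hb; rewrite !inE => /orP [/eqP ->|/eqP ab']; last by case: (dis a aS); rewrite ab'.
move=> /orP [/eqP ba'|/eqP ->] //.
by case: (dis b); rewrite // ba'.
Qed.

Lemma sum_FST (S T : {set 'I_n}) (j k : nat) : #|S| = j -> #|T| = k ->
  \sum_(E | is_graph E && (FST S T \subset E)) w E <= p ^+ (j * k).
Proof.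
move=> Sj Tk; case: (boolP (FST S T \subset pairs n)) => Fp.
  rewrite /w (sum_sup p Fp) FST_card // Sj Tk.
  by [].
rewrite big_pred0 //; last first.
  move=> E; apply/negP => /andP [EG FE]; move/negP: Fp; apply.
  exact: fintype.subset_trans FE EG.
by case/andP: p01 => p0 _; rewrite exprn_ge0.
Qed.

Definition hasK (E : {set {set 'I_n}}) j k := exists S T : {set 'I_n},
  [/\ #|S| = j, #|T| = k & forall u v, u \in S -> v \in T -> adj E u v].

Lemma sum_draws (j : nat) (c : R) : \sum_(S : {set 'I_n} | #|S| == j) c = 'C(n, j)%:R * c.
Proof.
rewrite (eq_bigl (fun S => S \in [set S : {set 'I_n} | #|S| == j])); last by move=> S; rewrite inE.
by rewrite sumr_const card_draws card_ord mulr_natl.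
Qed.

Lemma union_bound j k (Q : {set {set 'I_n}} -> Prop) :
  (forall E, is_graph E -> ~ Q E -> hasK E j k) ->
  \sum_(E | is_graph E && ~~ `[< Q E >]) w E <= 'C(n, j)%:R * 'C(n, k)%:R * p ^+ (j * k).
Proof.
move=> hQ.
pose c (E : {set {set 'I_n}}) (S T : {set 'I_n}) := ((FST S T \subset E)%:R * w E).
have c0 : forall E S T, 0 <= c E S T by move=> E S T; rewrite mulr_ge0 ?ler0n ?w_ge0.
apply: (@le_trans _ _ (\sum_(E | is_graph E)
   \sum_(S : {set 'I_n} | #|S| == j) \sum_(T : {set 'I_n} | #|T| == k) c E S T)).
  apply: (@le_trans _ _ (\sum_(E | is_graph E && ~~ `[< Q E >])
     \sum_(S : {set 'I_n} | #|S| == j) \sum_(T : {set 'I_n} | #|T| == k) c E S T)).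
    apply: ler_sum => E /andP [EG nQ].
    have [S [T [Sj Tk hST]]] := hQ E EG (fun q => (negP nQ) (asboolT q)).
    rewrite (bigD1 S) ?Sj ?eqxx //= (bigD1 T) ?Tk ?eqxx //=.
    have -> : c E S T = w E.
      rewrite /c; have -> : FST S T \subset E.
        apply/subsetP => e /imsetP [[u v]]; rewrite inE /= => /andP [uS vT] ->.
        exact: hST.
      by rewrite mul1r.
    rewrite -addrA lerDl addr_ge0 //; apply: sumr_ge0 => *; first exact: c0.
    by apply: sumr_ge0 => *; exact: c0.
  apply: sub_sum => [E|E /andP []] //.
  by apply: sumr_ge0 => S _; apply: sumr_ge0 => T _; exact: c0.
rewrite exchange_big /=.
apply: (@le_trans _ _ (\sum_(S : {set 'I_n} | #|S| == j) \sum_(T : {set 'I_n} | #|T| == k)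
    p ^+ (j * k))); last by rewrite !sum_draws mulrA.
apply: ler_sum => S /eqP Sj; rewrite exchange_big /=; apply: ler_sum => T /eqP Tk.
apply: le_trans (sum_FST Sj Tk).
rewrite [leRHS]big_mkcondr /=; apply: ler_sum => E _.
by rewrite /c; case: (FST S T \subset E); rewrite ?mul1r ?mul0r.
Qed.

End Final.


End TH2.

Unset Implicit Arguments.

Theorem theorem2p2 (R : realType) (p : nat -> R) (j k : nat -> nat)
  (hp : forall n, 0 <= p n <= 1)
  (hj : forall n, (0 < j n)%N) (hk : forall n, (0 < k n)%N)
  (hlim : (fun n => 'C(n, j n)%:R * 'C(n, k n)%:R * p n ^+ (j n * k n)) @ \oo --> (0 : R)) :
  (fun n => gnp_prob (p n) (fun E => @sdr_onto_complex_dim R n E (j n + k n - 2))) @ \oo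
    --> (1 : R).
Proof.
set b := fun n => 'C(n, j n)%:R * 'C(n, k n)%:R * p n ^+ (j n * k n) in hlim.
apply: (@squeeze_cvgr _ _ _ _ (fun n => 1 - b n) (fun=> 1)).
- apply: filterE => n; apply/andP; split; last exact: TH2.gnp_le1.
  have h : 1 - gnp_prob (p n) (fun E => @sdr_onto_complex_dim R n E (j n + k n - 2)) <= b n.
    rewrite TH2.gnp_compl //; apply: (TH2.union_bound (hp n)) => E EG nQ.
    case: (pselect (TH2.hasK E (j n) (k n))) => // nh; exfalso; apply: nQ.
    exact: TH2.det_main (hj n) (hk n) nh.
  by move: h; rewrite lerBlDr addrC -lerBlDr.
- rewrite -[X in _ --> X](subr0 1); apply: cvgB => //; exact: cvg_cst.
- exact: cvg_cst.
Qed.
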